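(* Let $G$ be a finite group and let $\alpha_1,\alpha_2\colon G\to\mathbf{GL}_n(k)$ be injective homomorphisms. Then there exists $\varphi\in\mathrm{Cr}_{2n}$ such that $\alpha_1=\mathrm{Int}(\varphi)\circ\alpha_2$, where $\mathrm{Int}(\varphi)$ denotes conjugation by $\varphi$.
   Context: $k$ is an algebraically closed field of characteristic zero. $\mathrm{Cr}_m$ is the Cremona group of rank $m$, i.e., the group of birational self-maps of $\mathbf{A}^m$. $\mathbf{GL}_n(k)$ is identified with the subgroup of $\mathrm{Cr}_n$ of linear transformations of $\mathbf{A}^n$, and $\mathrm{Cr}_n$ is identified with a subgroup of $\mathrm{Cr}_{2n}$ via the standard embedding (acting on the first $n$ coordinates of $\mathbf{A}^{2n}=\mathbf{A}^n\times\mathbf{A}^n$ and trivially on the last $n$). *)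

(* Defs.v *)
From HB Require Import structures.
From mathcomp Require Import all_boot all_order all_algebra all_fingroup.
From mathcomp Require Import fraction generic_quotient.
From mathcomp Require Import mpoly.
Set Implicit Arguments. Unset Strict Implicit. Unset Printing Implicit Defensive.
Import GRing.Theory.
Local Open Scope ring_scope.

Definition ratfun (k : fieldType) (m : nat) := {fraction {mpoly k[m]}}.

Section Cremona.
Variables (k : fieldType) (m : nat).
Local Notation K := (ratfun k m).

Definition ratX (i : 'I_m) : K := tofrac ('X_i : {mpoly k[m]}).
Definition ratC (c : k) : K := tofrac (c%:MP : {mpoly k[m]}).

(* chosen numerator and denominator of a rational function (denominator != 0) *)
Definition ratnum (f : K) : {mpoly k[m]} := (frac (repr f)).1.
Definition ratden (f : K) : {mpoly k[m]} := (frac (repr f)).2.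

Definition ratmap := 'I_m -> K.

Definition peval (h : ratmap) (p : {mpoly k[m]}) : K := mmap ratC h p.

(* f o h  is well defined: the denominator of f does not vanish along h *)
Definition admissible (h : ratmap) (f : K) : Prop := peval h (ratden f) != 0.

Definition rsubst (h : ratmap) (f : K) : K := peval h (ratnum f) / peval h (ratden f).

Definition rcomp (phi psi : ratmap) : ratmap := fun i => rsubst psi (phi i).
Definition rcomp_defined (phi psi : ratmap) : Prop := forall i, admissible psi (phi i).

Definition ratid : ratmap := ratX.

Definition birational_inverse (phi psi : ratmap) : Prop :=
  [/\ rcomp_defined phi psi, rcomp_defined psi phi,
      rcomp phi psi = ratid & rcomp psi phi = ratid].

Definition cremona (phi : ratmap) : Prop := exists psi, birational_inverse phi psi.

End Cremona.

(* The linear map x |-> A x of A^n, seen in Cr_{2n} through the standard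
   embedding Cr_n -> Cr_{2n} acting on the first n coordinates of
   A^{2n} = A^n x A^n and trivially on the last n. *)
Definition lin_cremona (k : fieldType) (n : nat) (A : 'M[k]_n) : ratmap k (n + n) :=
  fun i => match split i with
           | inl i' => \sum_(j < n) @ratC k (n + n) (A i' j) * @ratX k (n + n) (lshift n j)
           | inr _ => @ratX k (n + n) i
           end.

(* Main.v *)
Require Import Defs.
From HB Require Import structures.
From mathcomp Require Import all_boot all_order all_algebra all_fingroup.
From mathcomp Require Import fraction mpoly generic_quotient.
From mathcomp Require Import ring.
From Stdlib Require Import FunctionalExtensionality Classical.
Import GRing.Theory.
Local Open Scope ring_scope.
Local Open Scope quotient_scope.
Set Implicit Arguments. Unset Strict Implicit.

Lemma frac_repr (R : idomainType) (x : {fraction R}) :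
  x = tofrac (frac (repr x)).1 / tofrac (frac (repr x)).2.
Proof.
have hd := denom_ratioP (repr x).
rewrite -{1}[x]reprK.
unlock tofrac.
rewrite -[_ / _]/(FracField.mul _ (FracField.inv _)).
rewrite -FracField.pi_inv -FracField.pi_mul.
apply/eqmodP => /=.
rewrite FracField.equivfE /FracField.mulf /FracField.invf.
rewrite !numden_Ratio ?oner_eq0 ?mulr1 ?mul1r ?mulf_neq0 ?oner_eq0 //.
by rewrite mulrC.
Qed.

Lemma rmorph_mmap n (R S T : comNzRingType) (f : {rmorphism R -> S})
  (sg : {rmorphism S -> T}) (h : 'I_n -> S) p :
  sg (mmap f h p) = mmap (sg \o f) (sg \o h) p.
Proof.
rewrite /mmap rmorph_sum; apply: eq_bigr => mm _.
rewrite rmorphM /mmap1 rmorph_prod; congr (_ * _).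
by apply: eq_bigr => i _; rewrite rmorphXn.
Qed.

Lemma eq_mmap n (R S : nzRingType) (f1 f2 : R -> S) (h1 h2 : 'I_n -> S) p :
  f1 =1 f2 -> h1 =1 h2 -> mmap f1 h1 p = mmap f2 h2 p.
Proof.
by move=> e1 e2; rewrite /mmap /mmap1; apply: eq_bigr => mm _; rewrite e1;
  congr (_ * _); apply: eq_bigr => i _; rewrite e2.
Qed.

Lemma ff_sub (F : fieldType) (A B C D : F) : B != 0 -> D != 0 ->
  A / B - C / D = (A * D - C * B) / (B * D).
Proof. by move=> b0 d0; field; rewrite b0 d0. Qed.
Lemma ff_mul (F : fieldType) (A B C D : F) : B != 0 -> D != 0 ->
  A / B * (C / D) = (A * C) / (B * D).
Proof. by move=> b0 d0; field; rewrite b0 d0. Qed.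

Section Subst.
Variables (k : fieldType) (m : nat).
Local Notation K := (ratfun k m).
Local Notation P := {mpoly k[m]}.

Lemma ratC_is_zmod : zmod_morphism (@ratC k m).
Proof. by move=> a b; rewrite /ratC mpolyCB rmorphB. Qed.
HB.instance Definition _ := GRing.isZmodMorphism.Build k K (@ratC k m) ratC_is_zmod.
Lemma ratC_is_monoid : monoid_morphism (@ratC k m).
Proof. by split; [rewrite /ratC mpolyC1 rmorph1 | move=> a b; rewrite /ratC mpolyCM rmorphM]. Qed.
HB.instance Definition _ := GRing.isMonoidMorphism.Build k K (@ratC k m) ratC_is_monoid.

Lemma peval_is_zmod (h : ratmap k m) : zmod_morphism (peval h).
Proof. by move=> a b; rewrite /peval raddfB. Qed.
HB.instance Definition _ h := GRing.isZmodMorphism.Build P K (peval h) (peval_is_zmod h).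
Lemma peval_is_monoid (h : ratmap k m) : monoid_morphism (peval h).
Proof. by split; [rewrite /peval rmorph1 | move=> a b; rewrite /peval rmorphM]. Qed.
HB.instance Definition _ h := GRing.isMonoidMorphism.Build P K (peval h) (peval_is_monoid h).

Lemma pevalC (h : ratmap k m) c : peval h c%:MP = @ratC k m c.
Proof. by rewrite /peval mmapC. Qed.
Lemma pevalX (h : ratmap k m) i : peval h 'X_i = h i.
Proof. by rewrite /peval mmapX mmap1U. Qed.

Definition generic (h : ratmap k m) := forall p, peval h p = 0 -> p = 0.

Lemma generic_neq0 (h : ratmap k m) p : generic h -> p != 0 -> peval h p != 0.
Proof. by move=> gh; apply: contra => /eqP /gh ->. Qed.

Lemma fracE (f : K) : exists a b : P, b != 0 /\ f = tofrac a / tofrac b.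
Proof. exists (ratnum f), (ratden f); split; [exact: denom_ratioP | exact: frac_repr]. Qed.

Section Gen.
Variables (h : ratmap k m) (gh : generic h).

Lemma peval_frac_eq (n d p q : P) : d != 0 -> q != 0 ->
  tofrac p / tofrac q = tofrac n / tofrac d ->
  peval h n / peval h d = peval h p / peval h q.
Proof.
move=> d0 q0 e.
have tq : tofrac q != 0 by rewrite tofrac_eq0.
have td : tofrac d != 0 by rewrite tofrac_eq0.
have : n * q = p * d.
  apply/eqP; rewrite -tofrac_eq !rmorphM /=.
  apply/eqP; move: e => /(congr1 (fun x => x * tofrac q * tofrac d)).
  rewrite (divfK tq) mulrAC (divfK td) => e2; exact: esym e2.
move/(congr1 (peval h)); rewrite !rmorphM /= => e2.
have pq := generic_neq0 gh q0; have pd := generic_neq0 gh d0.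
apply: (mulIf pq); rewrite (divfK pq); apply: (mulIf pd).
rewrite mulrAC (divfK pd) e2; reflexivity.
Qed.

Lemma rsubst_frac p q : q != 0 -> rsubst h (tofrac p / tofrac q) = peval h p / peval h q.
Proof.
move=> q0; apply: peval_frac_eq => //; first exact: denom_ratioP.
exact: frac_repr.
Qed.

Lemma rsubst_tofrac p : rsubst h (tofrac p) = peval h p.
Proof. by rewrite -[tofrac p]divr1 -tofrac1 rsubst_frac ?oner_eq0 // rmorph1 divr1. Qed.

Lemma rsubst_is_zmod : zmod_morphism (rsubst h).
Proof.
move=> f g; have [a [b [b0 ->]]] := fracE f; have [c [d [d0 ->]]] := fracE g.
have tb : tofrac b != 0 by rewrite tofrac_eq0.
have td : tofrac d != 0 by rewrite tofrac_eq0.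
have pb := generic_neq0 gh b0; have pd := generic_neq0 gh d0.
have bd : b * d != 0 by rewrite mulf_neq0.
rewrite (ff_sub _ _ tb td) -!rmorphM -rmorphB (rsubst_frac _ bd) (rsubst_frac _ b0) (rsubst_frac _ d0).
by rewrite (ff_sub _ _ pb pd) !rmorphM rmorphB /= !rmorphM.
Qed.

Lemma rsubst_is_monoid : monoid_morphism (rsubst h).
Proof.
split; first by rewrite -tofrac1 rsubst_tofrac rmorph1.
move=> f g; have [a [b [b0 ->]]] := fracE f; have [c [d [d0 ->]]] := fracE g.
have tb : tofrac b != 0 by rewrite tofrac_eq0.
have td : tofrac d != 0 by rewrite tofrac_eq0.
have pb := generic_neq0 gh b0; have pd := generic_neq0 gh d0.
have bd : b * d != 0 by rewrite mulf_neq0.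
rewrite (ff_mul _ _ tb td) -!rmorphM (rsubst_frac _ bd) (rsubst_frac _ b0) (rsubst_frac _ d0).
by rewrite (ff_mul _ _ pb pd) !rmorphM.
Qed.

Lemma rsubstC c : rsubst h (@ratC k m c) = @ratC k m c.
Proof. by rewrite /ratC rsubst_tofrac pevalC. Qed.
Lemma rsubstX i : rsubst h (ratX k i) = h i.
Proof. by rewrite /ratX rsubst_tofrac pevalX. Qed.

End Gen.

Definition rsub (h : ratmap k m) (gh : generic h) : K -> K := rsubst h.
HB.instance Definition _ h gh := GRing.isZmodMorphism.Build K K (@rsub h gh) (rsubst_is_zmod gh).
HB.instance Definition _ h gh := GRing.isMonoidMorphism.Build K K (@rsub h gh) (rsubst_is_monoid gh).

Lemma pevalE (h : ratmap k m) p : peval h p = mmap (@ratC k m) h p.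
Proof. by []. Qed.

Lemma mmap_idX (p : P) : mmap (@mpolyC m k) (fun i => 'X_i) p = p.
Proof.
rewrite {2}[p]mpolyE /mmap; apply: eq_bigr => mm _.
by rewrite mmap1_id mul_mpolyC.
Qed.

Lemma peval_ratX p : peval (@ratX k m) p = tofrac p.
Proof.
rewrite -{2}[p]mmap_idX rmorph_mmap pevalE; apply: eq_mmap => // i.
Qed.

Lemma generic_id : generic (@ratX k m).
Proof. by move=> p; rewrite peval_ratX => /eqP; rewrite tofrac_eq0 => /eqP. Qed.

Lemma rsubst_id f : rsubst (@ratX k m) f = f.
Proof.
have [a [b [b0 ->]]] := fracE f.
by rewrite rsubst_frac ?peval_ratX //; exact: generic_id.
Qed.

Lemma peval_rcomp (a b : ratmap k m) (gb : generic b) p :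
  peval (rcomp a b) p = rsubst b (peval a p).
Proof.
rewrite -[rsubst b _]/(rsub gb _) pevalE rmorph_mmap; apply: eq_mmap => // c.
by rewrite /= /rsub rsubstC.
Qed.

Lemma generic_rcomp (a b : ratmap k m) : generic a -> generic b -> generic (rcomp a b).
Proof.
move=> ga gb p; rewrite (peval_rcomp _ gb) => e; apply: ga.
apply/eqP; rewrite -(fmorph_eq0 (rsub gb)); exact/eqP.
Qed.

Lemma rsubst_rcomp (a b : ratmap k m) (ga : generic a) (gb : generic b) f :
  rsubst b (rsubst a f) = rsubst (rcomp a b) f.
Proof.
have [x [y [y0 ->]]] := fracE f.
rewrite (rsubst_frac (generic_rcomp ga gb)) // (rsubst_frac ga) //.
rewrite !(peval_rcomp _ gb); exact: (fmorph_div (rsub gb)).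
Qed.

Lemma rcompA (a b c : ratmap k m) : generic b -> generic c ->
  rcomp (rcomp a b) c = rcomp a (rcomp b c).
Proof.
move=> gb gc; apply: functional_extensionality => i.
by rewrite /rcomp -/(rcomp b c) rsubst_rcomp.
Qed.

Lemma rcomp_id_r (a : ratmap k m) : rcomp a (@ratX k m) = a.
Proof. by apply: functional_extensionality => i; rewrite /rcomp rsubst_id. Qed.

Lemma rcomp_id_l (b : ratmap k m) : generic b -> rcomp (@ratX k m) b = b.
Proof. by move=> gb; apply: functional_extensionality => i; rewrite /rcomp rsubstX. Qed.

Lemma generic_left (a b : ratmap k m) : generic b -> rcomp a b = @ratX k m -> generic a.
Proof.
move=> gb e p /(congr1 (rsubst b)).
rewrite -(peval_rcomp _ gb) e peval_ratX.
rewrite -[rsubst b 0]/(rsub gb 0) rmorph0 => /eqP; rewrite tofrac_eq0 => /eqP //.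
Qed.

Lemma generic_admissible (h : ratmap k m) f : generic h -> admissible h f.
Proof. by move=> gh; apply: generic_neq0 => //; exact: denom_ratioP. Qed.

End Subst.

Section Chain.
Variables (k : fieldType) (m1 m : nat).
Local Notation P1 := {mpoly k[m1]}.
Local Notation P := {mpoly k[m]}.
Variable H : 'I_m1 -> P.

Definition pmap (p : P1) : P := mmap (@mpolyC m k) H p.

Lemma pmapD (p q : P1) : pmap (p + q) = pmap p + pmap q. Proof. exact: mmapD. Qed.
Lemma pmapM (p q : P1) : pmap (p * q) = pmap p * pmap q. Proof. exact: rmorphM. Qed.
Lemma pmapC c : pmap c%:MP = c%:MP. Proof. exact: mmapC. Qed.
Lemma pmapX i : pmap 'X_i = H i. Proof. by rewrite /pmap mmapX mmap1U. Qed.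
Lemma pmap0 : pmap 0 = 0. Proof. exact: mmap0. Qed.
Lemma pmap_is_zmod : zmod_morphism pmap.
Proof. by move=> a b; rewrite /pmap raddfB. Qed.
HB.instance Definition _ := GRing.isZmodMorphism.Build P1 P pmap pmap_is_zmod.
Lemma pmap_is_monoid : monoid_morphism pmap.
Proof. by split; [rewrite /pmap rmorph1 | move=> a b; rewrite /pmap rmorphM]. Qed.
HB.instance Definition _ := GRing.isMonoidMorphism.Build P1 P pmap pmap_is_monoid.

Definition good (p : P1) := forall j,
  (pmap p)^`M(j) = \sum_i pmap (p^`M(i)) * (H i)^`M(j).

Lemma goodD (p q : P1) : good p -> good q -> good (p + q).
Proof.
move=> gp gq j; rewrite pmapD mderivD gp gq -big_split /=.
by apply: eq_bigr => i _; rewrite mderivD pmapD mulrDl.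
Qed.

Lemma goodM (p q : P1) : good p -> good q -> good (p * q).
Proof.
move=> gp gq j; rewrite pmapM mderivM gp gq mulr_suml mulr_sumr -big_split /=.
apply: eq_bigr => i _; rewrite mderivM pmapD !pmapM; ring.
Qed.

Lemma goodC c : good c%:MP.
Proof.
move=> j; rewrite pmapC mderivC big1 // => i _.
by rewrite mderivC pmap0 mul0r.
Qed.

Lemma subXX (mm : 'X_{1..m1}) : (mm - mm = 0)%MM.
Proof. by apply/mnmP => x; rewrite mnmBE subnn mnm0E. Qed.

Lemma goodX l : good 'X_l.
Proof.
move=> j; rewrite pmapX (bigD1 l) //= big1 ?addr0.
  by rewrite mderivX mnm1E eqxx subXX mpolyX0 scale1r /pmap rmorph1 mul1r.
move=> i ne; rewrite mderivX mnm1E eq_sym (negbTE ne) scale0r pmap0 mul0r //.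
Qed.

Lemma good1 : good 1. Proof. by rewrite -mpolyC1; exact: goodC. Qed.

Lemma good_all (p : P1) : good p.
Proof.
rewrite [p]mpolyE; elim/big_rec: _ => [|mm q _ gq].
  by rewrite -mpolyC0; exact: goodC.
apply: goodD => //; rewrite -mul_mpolyC mpolyXE_id; apply: goodM; first exact: goodC.
apply: (big_ind good) => //; [exact: good1 | exact: goodM |] => i _.
elim: (mm i) => [|e ih]; first by rewrite expr0; exact: good1.
by rewrite exprS; apply: goodM => //; exact: goodX.
Qed.

End Chain.

Section Jac.
Variables (k : fieldType) (m : nat) (hk : [pchar k] =i pred0).
Local Notation P := {mpoly k[m]}.
Variable H : 'I_m -> P.
Local Notation pmap := (@pmap k m m H).
Local Notation good_all := (@good_all k m m H).

Definition jac : 'M[P]_m := \matrix_(i, j) (H i)^`M(j).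

Lemma jac_step p : \det jac != 0 -> pmap p = 0 -> forall i, pmap (p^`M(i)) = 0.
Proof.
move=> dJ p0.
pose v : 'rV[P]_m := \row_i pmap (p^`M(i)).
have vJ : v *m jac = 0.
  apply/matrixP => a j; rewrite !mxE.
  have := good_all p j; rewrite p0 mderiv0 => e; rewrite [RHS]e.
  by apply: eq_bigr => i _; rewrite !mxE.
have : \det jac *: v = 0 by rewrite -mul_mx_scalar -mul_mx_adj mulmxA vJ mul0mx.
move/eqP; rewrite scalemx_eq0 (negbTE dJ) /= => /eqP v0 i.
by have := congr1 (fun M : 'rV[P]_m => M 0 i) v0; rewrite !mxE.
Qed.

Lemma msize_deriv (p : P) i : (msize (p^`M(i)) <= (msize p).-1)%N.
Proof.
rewrite [msize (p^`M(i))]msizeE; apply/bigmax_leqP_seq => mm hm _.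
rewrite mcoeff_msupp mcoeff_mderiv in hm.
have : (mm + U_(i))%MM \in msupp p.
  rewrite mcoeff_msupp; apply: contraNneq hm => ->; by rewrite mul0rn.
move/msize_mdeg_lt; rewrite mdegD mdeg1 addn1.
by case: (msize p) => // s; rewrite ltnS.
Qed.

Lemma deriv0_const (p : P) : (forall i, p^`M(i) = 0) -> p = (p@_0)%:MP.
Proof.
move=> d0; apply/mpolyP => mm; rewrite mcoeffC.
have [->|nz] := eqVneq mm 0%MM; first by rewrite mulr1.
rewrite mulr0.
have [i hi] : exists i, mm i != 0%N.
  apply/existsP; apply: contraNT nz; rewrite negb_exists => /forallP a.
  by apply/eqP/mnmP => x; rewrite mnm0E; move: (a x); rewrite negbK => /eqP.
have le : (U_(i) <= mm)%MM by rewrite lep1mP.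
have := mcoeff_mderiv i p (mm - U_(i))%MM.
rewrite d0 mcoeff0 submK // => /esym/eqP.
by rewrite -mulr_natr mulf_eq0 (pcharf0P _).1 // orbF => /eqP.
Qed.

Lemma jac_inj : \det jac != 0 -> forall p, pmap p = 0 -> p = 0.
Proof.
move=> dJ; suff: forall s (p : P), (msize p <= s)%N -> pmap p = 0 -> p = 0.
  by move=> h p; exact: h (msize p) p (leqnn _).
elim=> [|s ih] p hs p0.
  have c := msize1_polyC (leq_trans hs (leq0n 1)).
  by move: p0; rewrite c pmapC => /eqP; rewrite mpolyC_eq0 => /eqP ->.
have c : p = (p@_0)%:MP.
  apply: deriv0_const => i; apply: ih; last exact: jac_step.
  by apply: leq_trans (msize_deriv p i) _; rewrite -ltnS; case: (msize p) hs.
by move: p0; rewrite c pmapC => /eqP; rewrite mpolyC_eq0 => /eqP ->.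
Qed.
End Jac.

Section PolyGen.
Variables (k : fieldType) (m : nat).
Local Notation K := (ratfun k m).
Local Notation P := {mpoly k[m]}.

Lemma peval_tofrac (H : 'I_m -> P) p :
  peval (fun i => tofrac (H i)) p = tofrac (@pmap k m m H p).
Proof. by rewrite /pmap rmorph_mmap pevalE; apply: eq_mmap. Qed.

Lemma generic_poly (H : 'I_m -> P) :
  (forall p, @pmap k m m H p = 0 -> p = 0) -> generic (fun i => tofrac (H i)).
Proof.
by move=> inj p; rewrite peval_tofrac => /eqP; rewrite tofrac_eq0 => /eqP /inj.
Qed.

Definition lmap (Q : 'M[K]_m) : ratmap k m := fun i => \sum_l Q i l * ratX k l.
Definition plmap (Q : 'M[P]_m) : 'I_m -> P := fun i => \sum_l Q i l * 'X_l.

Lemma lmap_tofrac (Q : 'M[P]_m) : lmap (map_mx (@tofrac _) Q) = fun i => tofrac (plmap Q i).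
Proof.
apply: functional_extensionality => i; rewrite /lmap /plmap rmorph_sum.
by apply: eq_bigr => l _; rewrite mxE rmorphM.
Qed.

Lemma mderivXU (l j : 'I_m) : ('X_l : P)^`M(j) = (l == j)%:R.
Proof.
rewrite mderivX mnm1E; case: eqP => [->|_].
  by rewrite subXX mpolyX0 scale1r.
by rewrite scale0r.
Qed.

Lemma jac_plmap_entry (Q : 'M[P]_m) i j :
  (forall l, (Q i l)^`M(j) = 0) -> jac (plmap Q) i j = Q i j.
Proof.
move=> d0; rewrite mxE /plmap raddf_sum /= (bigD1 j) //= big1 ?addr0.
  by rewrite mderivM d0 mul0r add0r mderivXU eqxx mulr1.
by move=> l nl; rewrite mderivM d0 mul0r add0r mderivXU (negbTE nl) mulr0.
Qed.

Lemma generic_const (hk : [pchar k] =i pred0) (C : 'M[k]_m) :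
  \det C != 0 -> generic (lmap (map_mx (@ratC k m) C)).
Proof.
move=> dC.
have -> : map_mx (@ratC k m) C = map_mx (@tofrac _) (map_mx (@mpolyC m k) C).
  by apply/matrixP => i j; rewrite !mxE.
rewrite lmap_tofrac; apply: generic_poly; apply: jac_inj => //.
have -> : jac (plmap (map_mx (@mpolyC m k) C)) = map_mx (@mpolyC m k) C.
  apply/matrixP => i j; apply: jac_plmap_entry => l; by rewrite mxE mderivC.
by rewrite det_map_mx mpolyC_eq0.
Qed.

Lemma lmap1 : lmap 1%:M = @ratX k m.
Proof.
apply: functional_extensionality => i; rewrite /lmap (bigD1 i) //= big1 ?addr0.
  by rewrite mxE eqxx mul1r.
by move=> l nl; rewrite mxE eq_sym (negbTE nl) mul0r.
Qed.

Lemma rcomp_lmap (Q R : 'M[K]_m) (gR : generic (lmap R)) :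
  rcomp (lmap Q) (lmap R) = lmap (map_mx (rsub gR) Q *m R).
Proof.
apply: functional_extensionality => i.
rewrite /rcomp {1}/lmap -[rsubst _ _]/(rsub gR _) rmorph_sum /=.
transitivity (\sum_l rsub gR (Q i l) * \sum_r R l r * ratX k r).
  apply: eq_bigr => l _; rewrite rmorphM /=; congr (_ * _).
  exact: (rsubstX gR).
under eq_bigr do rewrite mulr_sumr.
rewrite exchange_big /lmap /=; apply: eq_bigr => r _.
rewrite mxE mulr_suml; apply: eq_bigr => l _; rewrite mxE mulrA; reflexivity.
Qed.

End PolyGen.


Section Blocks.
Variables (k : fieldType) (n : nat).
Local Notation N := (n + n)%N.
Local Notation K := (ratfun k N).
Local Notation P := {mpoly k[N]}.
Local Notation Pn := {mpoly k[n]}.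

Lemma split_cases (i : 'I_N) : (exists j, i = lshift n j) \/ (exists j, i = rshift n j).
Proof.
by case E: (split i) => [j|j]; [left|right]; exists j; rewrite -(splitK i) E.
Qed.

Lemma split_lshift (j : 'I_n) : split (lshift n j) = inl j.
Proof. by rewrite -[lshift n j]/(unsplit (inl j)) unsplitK. Qed.
Lemma split_rshift (j : 'I_n) : split (rshift n j) = inr j.
Proof. by rewrite -[rshift n j]/(unsplit (inr j)) unsplitK. Qed.

Definition cblk (M : 'M[k]_n) (D : 'M[k]_n) : 'M[k]_N := block_mx M 0 0 D.

Lemma lin_cremona_lmap (M : 'M[k]_n) :
  lin_cremona M = lmap (map_mx (@ratC k N) (cblk M 1%:M)).
Proof.
apply: functional_extensionality => i; rewrite /lin_cremona /lmap /cblk map_block_mx.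
rewrite big_split_ord /=.
have [[j ->]|[j ->]] := split_cases i.
  rewrite split_lshift [X in _ = _ + X]big1 ?addr0.
    by apply: eq_bigr => l _; rewrite block_mxEul mxE.
  by move=> l _; rewrite block_mxEur !mxE rmorph0 mul0r.
rewrite split_rshift big1 ?add0r.
  rewrite (bigD1 j) //= big1 ?addr0.
    by rewrite block_mxEdr !mxE eqxx rmorph1 mul1r.
  by move=> l nl; rewrite block_mxEdr !mxE eq_sym (negbTE nl) rmorph0 mul0r.
by move=> l _; rewrite block_mxEdl !mxE rmorph0 mul0r.
Qed.

Lemma lmap_fixx (D : 'M[K]_n) (j : 'I_n) :
  lmap (block_mx 1%:M 0 0 D) (lshift n j) = ratX k (lshift n j).
Proof.
rewrite /lmap big_split_ord /= [X in _ + X]big1 ?addr0.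
  rewrite (bigD1 j) //= big1 ?addr0; first by rewrite block_mxEul mxE eqxx mul1r.
  by move=> l nl; rewrite block_mxEul mxE eq_sym (negbTE nl) mul0r.
by move=> l _; rewrite block_mxEur mxE mul0r.
Qed.

Definition xvar (j : 'I_n) : P := 'X_(lshift n j).
Definition embed (q : Pn) : P := @pmap k n N xvar q.

Lemma pmap_comp m1 m2 m3 (H : 'I_m2 -> {mpoly k[m3]}) (G : 'I_m1 -> {mpoly k[m2]}) q :
  @pmap k m2 m3 H (@pmap k m1 m2 G q) = @pmap k m1 m3 (fun i => @pmap k m2 m3 H (G i)) q.
Proof.
rewrite [@pmap _ m1 m2 G q]/pmap rmorph_mmap [RHS]/pmap; apply: eq_mmap => // c /=.
exact: mmapC.
Qed.

Lemma embed_inj (q : Pn) : embed q = 0 -> q = 0.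
Proof.
pose G (i : 'I_N) : Pn := match split i with inl j => 'X_j | inr _ => 0 end.
move=> e; have := congr1 (@pmap k N n G) e; rewrite /embed pmap_comp rmorph0.
have -> : @pmap k n n (fun i => @pmap k N n G (xvar i)) q = q.
  rewrite -[RHS]mmap_idX; apply: eq_mmap => // j.
  by rewrite /xvar pmapX /G split_lshift.
by [].
Qed.

Lemma embed_deriv (q : Pn) j : (embed q)^`M(rshift n j) = 0.
Proof.
rewrite /embed good_all big1 // => i _.
by rewrite /xvar mderivXU; case: eqP => [/eqP|_]; [rewrite eq_lrshift | rewrite mulr0].
Qed.

Lemma rsubst_embed (h : ratmap k N) (gh : generic h) :
  (forall j, h (lshift n j) = ratX k (lshift n j)) ->
  forall q, rsubst h (tofrac (embed q)) = tofrac (embed q).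
Proof.
move=> hx q; rewrite rsubst_tofrac // /embed /pmap pevalE.
rewrite !rmorph_mmap; apply: eq_mmap => [c|j] /=; rewrite -pevalE.
  by rewrite pevalC.
by rewrite /xvar pevalX hx.
Qed.

Definition Tact (M : 'M[k]_n) (q : Pn) : Pn :=
  @pmap k n n (fun j => \sum_l (M j l)%:MP * 'X_l) q.

Lemma rsubst_lin (M : 'M[k]_n) (gh : generic (lin_cremona M)) q :
  rsubst (lin_cremona M) (tofrac (embed q)) = tofrac (embed (Tact M q)).
Proof.
rewrite rsubst_tofrac // /embed /Tact pmap_comp /pmap pevalE !rmorph_mmap.
apply: eq_mmap => [c|j] /=; rewrite -pevalE.
  by rewrite pevalC.
rewrite -[mmap _ xvar _]/(@pmap k n N xvar _) (raddf_sum (@pmap k n N xvar)) (rmorph_sum (@tofrac _)).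
rewrite /xvar pevalX /lin_cremona split_lshift.
apply: eq_bigr => l _ /=; rewrite !rmorphM /= pmapC pmapX.
reflexivity.
Qed.

End Blocks.


HB.instance Definition _ (k : fieldType) (n : nat) :=
  GRing.RMorphism.copy (@embed k n) (@pmap k n (n+n) (@xvar k n)).

Lemma mderiv_nat (k : fieldType) m (b : nat) j : ((b%:R : {mpoly k[m]}))^`M(j) = 0.
Proof. by rewrite mderivMn -mpolyC1 mderivC mul0rn. Qed.

Section Const.
Variables (k : fieldType) (m : nat).
Lemma map_rsub_const (h : ratmap k m) (gh : generic h) (C : 'M[k]_m) :
  map_mx (rsub gh) (map_mx (@ratC k m) C) = map_mx (@ratC k m) C.
Proof. by apply/matrixP => i j; rewrite !mxE /rsub rsubstC. Qed.
Lemma map_rsub_constn n1 n2 (h : ratmap k m) (gh : generic h) (C : 'M[k]_(n1, n2)) :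
  map_mx (rsub gh) (map_mx (@ratC k m) C) = map_mx (@ratC k m) C.
Proof. by apply/matrixP => i j; rewrite !mxE /rsub rsubstC. Qed.

Lemma rcomp_const (C D : 'M[k]_m) (gD : generic (lmap (map_mx (@ratC k m) D))) :
  rcomp (lmap (map_mx (@ratC k m) C)) (lmap (map_mx (@ratC k m) D)) =
  lmap (map_mx (@ratC k m) (C *m D)).
Proof. by rewrite (rcomp_lmap _ gD) map_rsub_const map_mxM. Qed.
End Const.

Section Phi.
Variables (k : fieldType) (hk : [pchar k] =i pred0) (n : nat).
Local Notation N := (n + n)%N.
Local Notation K := (ratfun k N).
Local Notation P := {mpoly k[N]}.
Local Notation Pn := {mpoly k[n]}.
Variable Ah : 'M[Pn]_n.
Hypothesis dAh : \det Ah != 0.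

Definition EA : 'M[P]_n := map_mx (@embed k n) Ah.
Definition AQ : 'M[P]_N := block_mx 1%:M 0 0 EA.
Definition A' : 'M[K]_n := map_mx (@tofrac _) EA.
Definition PhiM : 'M[K]_N := block_mx 1%:M 0 0 A'.
Definition Phi := lmap PhiM.
Definition PhiIM : 'M[K]_N := block_mx 1%:M 0 0 (invmx A').
Definition PhiI := lmap PhiIM.

Lemma PhiM_tofrac : PhiM = map_mx (@tofrac _) AQ.
Proof. by rewrite /AQ map_block_mx map_mx1 !map_mx0. Qed.

Lemma detEA : \det EA != 0.
Proof. by rewrite /EA det_map_mx; apply: contra dAh => /eqP /embed_inj ->. Qed.

Lemma generic_Phi : generic Phi.
Proof.
rewrite /Phi PhiM_tofrac lmap_tofrac; apply: generic_poly; apply: jac_inj => //.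
set J := jac _.
have -> : J = block_mx 1%:M 0 (dlsubmx J) EA.
  rewrite -[J in LHS]submxK; congr block_mx; apply/matrixP => i j; rewrite 2![X in X = _]mxE /J.
  - rewrite jac_plmap_entry; first by rewrite /AQ block_mxEul.
    move=> l; have [[l' ->]|[l' ->]] := split_cases l.
      by rewrite /AQ block_mxEul mxE mderiv_nat.
    by rewrite /AQ block_mxEur mxE mderiv0.
  - rewrite jac_plmap_entry; first by rewrite /AQ block_mxEur mxE.
    move=> l; have [[l' ->]|[l' ->]] := split_cases l.
      by rewrite /AQ block_mxEul mxE mderiv_nat.
    by rewrite /AQ block_mxEur mxE mderiv0.
  - rewrite jac_plmap_entry; first by rewrite /AQ block_mxEdr.
    move=> l; have [[l' ->]|[l' ->]] := split_cases l.
      by rewrite /AQ block_mxEdl mxE mderiv0.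
    by rewrite /AQ block_mxEdr /EA mxE embed_deriv.
by rewrite det_lblock det1 mul1r detEA.
Qed.

Lemma unitA' : A' \in unitmx.
Proof.
rewrite unitmxE /A' det_map_mx unitfE tofrac_eq0; exact: detEA.
Qed.

Lemma rsub_A' (h : ratmap k N) (gh : generic h) :
  (forall j, h (lshift n j) = ratX k (lshift n j)) -> map_mx (rsub gh) A' = A'.
Proof.
move=> hx; apply/matrixP => i j; rewrite !mxE /rsub /=.
exact: rsubst_embed.
Qed.


Lemma Phi_fix j : Phi (lshift n j) = ratX k (lshift n j).
Proof. exact: lmap_fixx. Qed.
Lemma PhiI_fix j : PhiI (lshift n j) = ratX k (lshift n j).
Proof. exact: lmap_fixx. Qed.

Lemma blk11 : block_mx (1%:M : 'M[K]_n) 0 0 (1%:M : 'M[K]_n) = 1%:M.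
Proof. by rewrite -(scalar_mx_block n n). Qed.

Lemma PhiI_Phi : rcomp PhiI Phi = @ratX k N.
Proof.
have gP := generic_Phi.
rewrite /PhiI (rcomp_lmap _ gP) /PhiIM map_block_mx map_mx1 !map_mx0 map_invmx.
rewrite (rsub_A' gP Phi_fix) /PhiM mulmx_block.
rewrite !(mul1mx, mulmx1, mul0mx, mulmx0, addr0, add0r) (mulVmx unitA') blk11.
exact: lmap1.
Qed.

Lemma generic_PhiI : generic PhiI.
Proof. exact: generic_left generic_Phi PhiI_Phi. Qed.

Lemma Phi_PhiI : rcomp Phi PhiI = @ratX k N.
Proof.
have gP := generic_PhiI.
rewrite /Phi (rcomp_lmap _ gP) /PhiM map_block_mx map_mx1 !map_mx0.
rewrite (rsub_A' gP PhiI_fix) /PhiIM mulmx_block.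
rewrite !(mul1mx, mulmx1, mul0mx, mulmx0, addr0, add0r) (mulmxV unitA') blk11.
exact: lmap1.
Qed.


Lemma Phi_equiv (M Bm : 'M[k]_n) :
  map_mx (@Tact k n M) Ah = map_mx (@mpolyC n k) Bm *m Ah ->
  generic (lin_cremona M) ->
  rcomp Phi (lin_cremona M) = rcomp (lmap (map_mx (@ratC k N) (cblk M Bm))) Phi.
Proof.
move=> hT gL; have gL' := gL; rewrite lin_cremona_lmap in gL'.
rewrite lin_cremona_lmap (rcomp_lmap _ gL') (rcomp_lmap _ generic_Phi).
have eA : map_mx (rsub gL') A' = map_mx (@ratC k N) Bm *m A'.
  apply/matrixP => i j; rewrite !mxE /rsub -lin_cremona_lmap (rsubst_lin gL).
  have := congr1 (fun X : 'M[Pn]_n => X i j) hT; rewrite !mxE => ->.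
  rewrite (raddf_sum (@embed k n)) (rmorph_sum (@tofrac _)).
  apply: eq_bigr => l _; rewrite !mxE.
  transitivity (tofrac (embed (Bm i l)%:MP * embed (Ah l j))).
    by congr tofrac; exact: pmapM.
  rewrite (rmorphM (@tofrac _)); congr (_ * _); rewrite /embed /pmap mmapC; reflexivity.
have e1 : map_mx (rsub gL') PhiM = block_mx 1%:M 0 0 (map_mx (@ratC k N) Bm *m A').
  by rewrite /PhiM map_block_mx map_mx1 !map_mx0 eA.
rewrite e1 map_rsub_const /cblk /PhiM !map_block_mx map_mx1 !map_mx0 !mulmx_block.
by rewrite !(mul1mx, mulmx1, mul0mx, mulmx0, addr0, add0r).
Qed.

End Phi.


Section Key.
Variables (k : fieldType) (hk : [pchar k] =i pred0) (n : nat).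
Local Notation N := (n + n)%N.
Local Notation K := (ratfun k N).
Variable gT : finGroupType.
Variables (a1 a2 : gT -> 'M[k]_n).
Hypothesis h1mul : forall x y : gT, a1 (x * y)%g = a1 x *m a1 y.
Hypothesis h1one : a1 1%g = 1%:M.
Hypothesis h2mul : forall x y : gT, a2 (x * y)%g = a2 x *m a2 y.
Hypothesis h2one : a2 1%g = 1%:M.
Variables (Ah Bh : 'M[{mpoly k[n]}]_n).
Hypothesis dA : \det Ah != 0.
Hypothesis dB : \det Bh != 0.
Hypothesis eqA : forall g, map_mx (@Tact k n (a1 g)) Ah = map_mx (@mpolyC n k) (a2 g) *m Ah.
Hypothesis eqB : forall g, map_mx (@Tact k n (a2 g)) Bh = map_mx (@mpolyC n k) (a1 g) *m Bh.

Definition Sc : 'M[k]_N := block_mx 0 1%:M 1%:M 0.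
Definition Smap : ratmap k N := lmap (map_mx (@ratC k N) Sc).
Definition Lin2 (M D : 'M[k]_n) : ratmap k N := lmap (map_mx (@ratC k N) (cblk M D)).

Lemma ScSc : Sc *m Sc = 1%:M.
Proof.
rewrite /Sc mulmx_block !(mul1mx, mulmx1, mul0mx, mulmx0, addr0, add0r).
by rewrite -(scalar_mx_block n n).
Qed.

Lemma det_unit (M M' : 'M[k]_N) : M *m M' = 1%:M -> \det M != 0.
Proof.
move=> e; apply/eqP => d0; have := congr1 determinant e.
by rewrite det_mulmx d0 mul0r det1 => /eqP; rewrite eq_sym oner_eq0.
Qed.

Lemma det_unitn (M M' : 'M[k]_n) : M *m M' = 1%:M -> \det M != 0.
Proof.
move=> e; apply/eqP => d0; have := congr1 determinant e.
by rewrite det_mulmx d0 mul0r det1 => /eqP; rewrite eq_sym oner_eq0.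
Qed.

Lemma det_a (a : gT -> 'M[k]_n) : (forall x y : gT, a (x * y)%g = a x *m a y) ->
  a 1%g = 1%:M -> forall g, \det (a g) != 0.
Proof. move=> hm h1 g; apply: (@det_unitn (a g) (a (g^-1)%g)); by rewrite -hm mulgV. Qed.

Lemma generic_Lin2 (M D : 'M[k]_n) : \det M != 0 -> \det D != 0 -> generic (Lin2 M D).
Proof. by move=> dM dD; apply: generic_const => //; rewrite /cblk det_lblock mulf_neq0. Qed.

Lemma generic_S : generic Smap.
Proof. apply: generic_const => //; exact: det_unit ScSc. Qed.

Lemma generic_lin (M : 'M[k]_n) : \det M != 0 -> generic (lin_cremona M).
Proof. by move=> dM; rewrite lin_cremona_lmap; apply: generic_Lin2; rewrite // det1 oner_eq0. Qed.

Lemma SS : rcomp Smap Smap = @ratX k N.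
Proof. by rewrite /Smap (rcomp_const _ generic_S) ScSc map_mx1 lmap1. Qed.

Lemma S_Lin2 (M D : 'M[k]_n) (g2 : generic (Lin2 M D)) :
  rcomp Smap (Lin2 M D) = rcomp (Lin2 D M) Smap.
Proof.
rewrite /Smap /Lin2 (rcomp_const _ g2) (rcomp_const _ generic_S); congr (lmap (map_mx _ _)).
rewrite /Sc /cblk !mulmx_block.
by rewrite !(mul1mx, mulmx1, mul0mx, mulmx0, addr0, add0r).
Qed.


Definition phiOf (A B : 'M[{mpoly k[n]}]_n) := rcomp (rcomp (PhiI A) Smap) (Phi B).

Lemma generic_phiOf (A B : 'M[{mpoly k[n]}]_n) : \det A != 0 -> \det B != 0 -> generic (phiOf A B).
Proof.
move=> dA' dB'; apply: generic_rcomp; last exact: generic_Phi.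
apply: generic_rcomp; [exact: generic_PhiI | exact: generic_S].
Qed.

Lemma key g : rcomp (phiOf Ah Bh) (rcomp (lin_cremona (a2 g)) (phiOf Bh Ah)) = lin_cremona (a1 g).
Proof.
have d1 := det_a h1mul h1one g; have d2 := det_a h2mul h2one g.
have gPA := generic_Phi hk dA; have gPB := generic_Phi hk dB.
have gIA := generic_PhiI hk dA; have gIB := generic_PhiI hk dB.
have gS := generic_S; have gL1 := generic_lin d1; have gL2 := generic_lin d2.
have g12 := generic_Lin2 d1 d2; have g21 := generic_Lin2 d2 d1.
have gSA : generic (rcomp Smap (Phi Ah)) by exact: generic_rcomp.
have gY : generic (rcomp (PhiI Bh) (rcomp Smap (Phi Ah))) by exact: generic_rcomp.
have eY : phiOf Bh Ah = rcomp (PhiI Bh) (rcomp Smap (Phi Ah)) by rewrite /phiOf rcompA.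
have gX : generic (rcomp (lin_cremona (a2 g)) (phiOf Bh Ah)).
  apply: generic_rcomp => //; exact: generic_phiOf.
have e1 : rcomp (Phi Bh) (rcomp (lin_cremona (a2 g)) (phiOf Bh Ah)) =
          rcomp (Lin2 (a2 g) (a1 g)) (rcomp Smap (Phi Ah)).
  rewrite eY -(rcompA _ gL2 gY) (Phi_equiv hk dB (eqB g) gL2).
  rewrite (rcompA _ gPB gY) -(rcompA _ gIB gSA) (Phi_PhiI hk dB) (rcomp_id_l gSA).
  reflexivity.
have gPX : generic (rcomp (Phi Bh) (rcomp (lin_cremona (a2 g)) (phiOf Bh Ah))).
  exact: generic_rcomp.
rewrite /phiOf (rcompA _ gPB gX) (rcompA _ gS gPX) e1.
rewrite -(rcompA _ g21 gSA) (S_Lin2 g21) (rcompA _ gS gSA) -(rcompA _ gS gPA) SS.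
rewrite (rcomp_id_l gPA) /Lin2.
rewrite -/(Lin2 (a1 g) (a2 g)) -(Phi_equiv hk dA (eqA g) gL1).
rewrite -(rcompA _ gPA gL1) (PhiI_Phi hk dA) (rcomp_id_l gL1).
reflexivity.
Qed.

End Key.


Section Construct.
Variables (k : fieldType) (hk : [pchar k] =i pred0) (n : nat).
Local Notation Pn := {mpoly k[n]}.

Lemma nat_inj (i j : nat) : (i%:R : k) = j%:R -> i = j.
Proof.
have H (a b : nat) : (a <= b)%N -> (a%:R : k) = b%:R -> a = b.
  move=> ab e; apply/eqP; rewrite eqn_leq ab /=.
  have : ((b - a)%:R : k) = 0 by rewrite natrB // e subrr.
  move/eqP; rewrite ((pcharf0P k).1 hk) subn_eq0 //.
move=> e; case: (leqP i j) => [ij|/ltnW ji]; first exact: H.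
by apply/esym/H.
Qed.

Lemma exists_nonroot (Q : {poly k}) : Q != 0 -> exists t, ~~ root Q t.
Proof.
move=> Q0; case: (classic (exists t, ~~ root Q t)) => // nx; exfalso.
have allr : forall t, root Q t.
  by move=> t; apply/negPn/negP => h; apply: nx; exists t.
pose s := [seq (i%:R : k) | i <- iota 0 (size Q)].
have a : all (root Q) s by apply/allP => x _; exact: allr.
have u : uniq s by rewrite map_inj_uniq ?iota_uniq //; exact: nat_inj.
by have := max_poly_roots Q0 a u; rewrite size_map size_iota ltnn.
Qed.


Variable gT : finGroupType.
Variables (a1 a2 : gT -> 'M[k]_n).
Hypothesis h1mul : forall x y : gT, a1 (x * y)%g = a1 x *m a1 y.
Hypothesis h1one : a1 1%g = 1%:M.
Hypothesis h1inj : injective a1.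
Hypothesis h2mul : forall x y : gT, a2 (x * y)%g = a2 x *m a2 y.
Hypothesis h2one : a2 1%g = 1%:M.

Definition pt (x0 : 'I_n -> k) (h : gT) : 'I_n -> k := fun j => \sum_l a1 h j l * x0 l.

Lemma pt1 x0 : pt x0 1%g = x0.
Proof.
apply: functional_extensionality => j; rewrite /pt h1one (bigD1 j) //= big1 ?addr0.
  by rewrite mxE eqxx mul1r.
by move=> l nl; rewrite mxE eq_sym (negbTE nl) mul0r.
Qed.

Lemma free_point : exists x0 : 'I_n -> k, forall h, h != 1%g -> exists r, pt x0 h r != x0 r.
Proof.
have : forall h : gT, exists q : {poly k}, (q != 0) /\ (forall t : k, ~~ root q t -> h != 1%g -> exists r, pt (fun l => t ^+ l) h r != t ^+ r).
  move=> h; case: (eqVneq h 1%g) => [->|nh].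
    by exists 1; split; [rewrite oner_eq0 | move=> t _; case].
  have [r [l hrl]] : exists r l, (a1 h - 1%:M) r l != 0.
    case: (classic (exists r l, (a1 h - 1%:M) r l != 0)) => // nx; exfalso.
    have : a1 h = a1 1%g.
      rewrite h1one; apply/eqP; rewrite -subr_eq0; apply/eqP/matrixP => r l.
      rewrite [RHS]mxE; apply/eqP/negPn/negP => e; apply: nx; exists r, l; exact: e.
    by move/h1inj => e; move: nh; rewrite e => /eqP; apply.
  have iK (i : 'I_n) : insubd r (val i) = i.
    by apply: val_inj; rewrite val_insubd ltn_ord.
  exists (\poly_(i < n) (a1 h - 1%:M) r (insubd r i)); split.
    apply/eqP => e; have := congr1 (fun p : {poly k} => p`_l) e.
    by rewrite coef_poly ltn_ord coef0 iK => /eqP; rewrite (negbTE hrl).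
  move=> t nt _; exists r; apply: contra nt => /eqP e.
  rewrite /root horner_poly.
  under eq_bigr do rewrite iK !mxE mulrDl mulNr.
  rewrite big_split /= sumrN.
  rewrite /pt /= in e; rewrite e (bigD1 r) //= big1 ?addr0.
    by rewrite eqxx mul1r subrr.
  by move=> i ni; rewrite eq_sym (negbTE ni) mul0r.
move/fin_all_exists => [q hq].
have Q0 : \prod_h q h != 0 by apply/prodf_neq0 => h _; exact: (hq h).1.
have [t nt] := exists_nonroot Q0.
exists (fun l => t ^+ l) => h nh; apply: (hq h).2 nh.
move: nt; rewrite /root horner_prod => /prodf_neq0 /(_ h isT) //.
Qed.


Lemma exists_c (x0 : 'I_n -> k) :
  (forall h, h != 1%g -> exists r, pt x0 h r != x0 r) ->
  exists c : Pn, forall h, c.@[pt x0 h] = (h == 1%g)%:R.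
Proof.
move=> hx.
have : forall h : gT, exists l : Pn, h != 1%g -> (l.@[x0] = 1) /\ (l.@[pt x0 h] = 0).
  move=> h; case: (eqVneq h 1%g) => [_|nh]; first by exists 0.
  have [r hr] := hx h nh.
  exists (('X_r - (pt x0 h r)%:MP) * ((x0 r - pt x0 h r)^-1)%:MP) => _.
  rewrite !rmorphM !rmorphB /= !mevalXU !mevalC; split.
    by rewrite mulfV // subr_eq0 eq_sym.
  by rewrite subrr mul0r.
move/fin_all_exists => [l hl].
exists (\prod_(h | h != 1%g) l h) => h'.
rewrite rmorph_prod; case: (eqVneq h' 1%g) => [->|nh'].
  by rewrite pt1 big1 // => h nh; exact: (hl h nh).1.
by rewrite (bigD1 h') //= (hl h' nh').2 mul0r.
Qed.

Definition linf (M : 'M[k]_n) (j : 'I_n) : Pn := \sum_l (M j l)%:MP * 'X_l.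

Lemma TactE (M : 'M[k]_n) q : Tact M q = @pmap k n n (linf M) q.
Proof. by []. Qed.

Lemma pmap_linf (A B : 'M[k]_n) j : @pmap k n n (linf A) (linf B j) = linf (B *m A) j.
Proof.
rewrite {1}/linf (raddf_sum (@pmap k n n (linf A))).
transitivity (\sum_l (B j l)%:MP * \sum_r (A l r)%:MP * ('X_r : Pn)).
  apply: eq_bigr => l _.
  transitivity (@pmap k n n (linf A) (B j l)%:MP * @pmap k n n (linf A) 'X_l).
    exact: pmapM.
  by rewrite {1}/pmap mmapC pmapX.
under eq_bigr do rewrite mulr_sumr.
rewrite exchange_big /linf; apply: eq_bigr => r _.
rewrite mxE (rmorph_sum (@mpolyC n k)) mulr_suml; apply: eq_bigr => l _.
by rewrite rmorphM mulrA.
Qed.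

Lemma Tact_comp (A B : 'M[k]_n) q : Tact A (Tact B q) = Tact (B *m A) q.
Proof.
rewrite !TactE pmap_comp /pmap; apply: eq_mmap => // j.
exact: pmap_linf.
Qed.

Lemma meval_Tact (x0 : 'I_n -> k) h (c : Pn) : (Tact (a1 h) c).@[x0] = c.@[pt x0 h].
Proof.
rewrite TactE /pmap /meval rmorph_mmap; apply: eq_mmap => [d|j] /=.
  exact: mevalC.
rewrite /linf rmorph_sum; apply: eq_bigr => l _.
by rewrite rmorphM /= mmapC mmapX mmap1U.
Qed.


Definition Ahc (c : Pn) : 'M[Pn]_n :=
  \sum_(h : gT) Tact (a1 h) c *: map_mx (@mpolyC n k) (a2 (h^-1)%g).

Lemma Ahc_equiv c g :
  map_mx (@Tact k n (a1 g)) (Ahc c) = map_mx (@mpolyC n k) (a2 g) *m Ahc c.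
Proof.
rewrite /Ahc -[@Tact k n (a1 g)]/(@pmap k n n (linf (a1 g))).
rewrite (map_mx_sum (@pmap k n n (linf (a1 g)))) mulmx_sumr.
rewrite [RHS](reindex_inj (mulIg g)) /=.
apply: eq_bigr => h _.
rewrite map_mxZ -scalemxAr -map_mxM -h2mul.
have -> : map_mx (@pmap k n n (linf (a1 g))) (map_mx (@mpolyC n k) (a2 (h^-1)%g)) =
          map_mx (@mpolyC n k) (a2 (h^-1)%g).
  by apply/matrixP => i j; rewrite !mxE /pmap mmapC.
congr (_ *: _); first by rewrite h1mul -Tact_comp.
by rewrite invMg mulKVg.
Qed.

Lemma det_Ahc (x0 : 'I_n -> k) c : (forall h, c.@[pt x0 h] = (h == 1%g)%:R) -> \det (Ahc c) != 0.
Proof.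
move=> hc.
have e : map_mx (meval x0) (Ahc c) = 1%:M.
  rewrite /Ahc (map_mx_sum (meval x0)) (bigD1 1%g) //= big1 ?addr0.
    rewrite map_mxZ /= meval_Tact hc eqxx scale1r invg1 h2one.
    by apply/matrixP => i j; rewrite !mxE mevalC.
  by move=> h nh; rewrite map_mxZ /= meval_Tact hc (negbTE nh) scale0r.
apply/eqP => d0; have := congr1 determinant e.
by rewrite det_map_mx d0 rmorph0 det1 => /eqP; rewrite eq_sym oner_eq0.
Qed.

Lemma construct : exists Ah : 'M[Pn]_n, \det Ah != 0 /\
  forall g, map_mx (@Tact k n (a1 g)) Ah = map_mx (@mpolyC n k) (a2 g) *m Ah.
Proof.
have [x0 hx] := free_point.
have [c hc] := exists_c hx.
exists (Ahc c); split; [exact: det_Ahc hc | exact: Ahc_equiv].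
Qed.

End Construct.

Lemma lin_cremona1 (k : fieldType) (n : nat) : lin_cremona (1%:M : 'M[k]_n) = @ratX k (n + n).
Proof.
rewrite lin_cremona_lmap /cblk -(scalar_mx_block n n) map_mx1; exact: lmap1.
Qed.

Local Close Scope quotient_scope.
Unset Implicit Arguments.

Theorem proposition3p2 (k : closedFieldType) (hk : [pchar k] =i pred0)
  (gT : finGroupType) (n : nat) (alpha1 alpha2 : gT -> 'M[k]_n)
  (h1mul : forall x y : gT, alpha1 (x * y)%g = alpha1 x *m alpha1 y)
  (h1one : alpha1 1%g = 1%:M)
  (h1inj : injective alpha1)
  (h2mul : forall x y : gT, alpha2 (x * y)%g = alpha2 x *m alpha2 y)
  (h2one : alpha2 1%g = 1%:M)
  (h2inj : injective alpha2) :
  exists phi psi : ratmap k (n + n),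
    birational_inverse phi psi /\
    forall g : gT,
      rcomp_defined (lin_cremona (alpha2 g)) psi /\
      rcomp_defined phi (rcomp (lin_cremona (alpha2 g)) psi) /\
      lin_cremona (alpha1 g) = rcomp phi (rcomp (lin_cremona (alpha2 g)) psi).
Proof.
have [Ah [dA eqA]] := construct hk h1mul h1one h1inj h2mul h2one.
have [Bh [dB eqB]] := construct hk h2mul h2one h2inj h1mul h1one.
have gphi := generic_phiOf hk dA dB.
have gpsi := generic_phiOf hk dB dA.
have key12 := key hk h1mul h1one h2mul h2one dA dB eqA eqB.
have key21 := key hk h2mul h2one h1mul h1one dB dA eqB eqA.
exists (phiOf Ah Bh), (phiOf Bh Ah); split.
  split.
  - by move=> i; apply: generic_admissible.
  - by move=> i; apply: generic_admissible.
  - have := key12 1%g; rewrite h2one h1one lin_cremona1 (rcomp_id_l gpsi) => ->.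
    reflexivity.
  - have := key21 1%g; rewrite h2one h1one lin_cremona1 (rcomp_id_l gphi) => ->.
    reflexivity.
move=> g; have gL2 := generic_lin hk (det_a h2mul h2one g).
split; first by move=> i; apply: generic_admissible.
split; first by move=> i; apply: generic_admissible; apply: generic_rcomp.
exact: esym (key12 g).
Qed.
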